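(* Let $a\ge2$, $d\ge1$, $h\ge1$ and $s$ be integers with $\gcd(a,d)=1$ and $1\le s<a$. Let $\mathit{NR}$ be the set of positive integers not representable as $ax_0+\sum_{i=1}^s(ha+id)x_i$ with $x_0,\dots,x_s$ nonnegative integers, and let $S_m=\sum_{n\in\mathit{NR}}n^m$. Then for every integer $m\ge1$, \[ mS_{m-1}=a^{m-1}\sum_{n=0}^{a-1}B_m\!\left(h\lceil n/s\rceil+\frac{nd}{a}\right)-B_m, \] and, as an identity of functions (equivalently of power series about $z=0$), \[ \sum_{m=0}^\infty S_m\frac{z^m}{m!}=\frac{e^{(h\lceil\frac{a-1}{s}\rceil+d)az}-1}{(e^{dz}-1)(e^{az}-1)}+\frac{(e^{ahz}-1)\bigl(e^{\lceil\frac{a-1}{s}\rceil(ha+sd)z}-1\bigr)}{(e^{az}-1)(e^{(ha+sd)z}-1)(e^{-dz}-1)}-\frac{1}{e^z-1}. \]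
   Context: $B_m(x)$ denotes the Bernoulli polynomials, defined by $\frac{te^{tx}}{e^t-1}=\sum_{m\ge0}B_m(x)\frac{t^m}{m!}$, and $B_m=B_m(0)$. $\lceil x\rceil$ is the least integer not less than $x$. *)

(* Defs.v *)
From HB Require Import structures.
From mathcomp Require Import all_boot all_order all_algebra.
From mathcomp Require Import all_classical all_reals all_analysis.
Set Implicit Arguments. Unset Strict Implicit. Unset Printing Implicit Defensive.
Import Order.TTheory GRing.Theory Num.Theory.
Local Open Scope ring_scope.

(* Bernoulli numbers B_m = B_m(0) for t/(e^t-1): B_0 = 1 and, for m >= 1,
   sum_{k=0}^{m} C(m+1,k) B_k = 0 (coefficient comparison in
   (e^t-1)/t * t/(e^t-1) = 1). bern_seq n = [:: B_0; ...; B_n]. *)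
Fixpoint bern_seq (R : fieldType) (n : nat) : seq R :=
  match n with
  | 0 => [:: 1]
  | n'.+1 =>
      let s := bern_seq R n' in
      rcons s (- (\sum_(k < n'.+1) ('C(n'.+2, k))%:R * nth 0 s k) / (n'.+2)%:R)
  end.

Definition bernoulli (R : fieldType) (m : nat) : R := nth 0 (bern_seq R m) m.

(* Bernoulli polynomials: t e^{tx}/(e^t-1) = sum_m B_m(x) t^m/m!, i.e.
   B_m(x) = sum_k C(m,k) B_k x^(m-k) (Cauchy product of t/(e^t-1) and e^{tx}). *)
Definition bernoulli_poly (R : fieldType) (m : nat) (x : R) : R :=
  \sum_(k < m.+1) ('C(m, k))%:R * bernoulli R k * x ^+ (m - k).

Definition representable (a d h s n : nat) : Prop :=
  exists x : nat -> nat,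
    n = (a * x 0 + \sum_(1 <= i < s.+1) (h * a + i * d) * x i)%N.

Definition NR (a d h s n : nat) : Prop := (0 < n)%N /\ ~ representable a d h s n.

(* S_m = sum_{n in NR} n^m, computed over n < N, where N is any strict upper
   bound of NR (the theorem asserts that such a bound exists). *)
Definition Ssum (R : ringType) (a d h s N m : nat) : R :=
  \sum_(n < N | `[< NR a d h s n >]) (n%:R) ^+ m.

(* Main.v *)
Require Import Defs.
From HB Require Import structures.
From mathcomp Require Import all_boot all_order all_algebra.
From mathcomp Require Import all_classical all_reals all_analysis.
From mathcomp Require Import ring lra zify.
Import Order.TTheory GRing.Theory Num.Theory.

Module AuxA.
Set Implicit Arguments. Unset Strict Implicit. Unset Printing Implicit Defensive.
Local Open Scope ring_scope.

Section Bern.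
Variable R : numFieldType.

Lemma size_bern_seq n : size (bern_seq R n) = n.+1.
Proof. by elim: n => [|n IH] //=; rewrite size_rcons IH. Qed.

Lemma nth_bern_seq n k : (k <= n)%N -> nth 0 (bern_seq R n) k = bernoulli R k.
Proof.
elim: n => [|n IH]; first by rewrite leqn0 => /eqP ->.
rewrite leq_eqVlt => /orP [/eqP -> //|]; rewrite ltnS => hk.
by rewrite /= nth_rcons size_bern_seq ltnS hk IH.
Qed.

Lemma bernoulli0 : bernoulli R 0 = 1.
Proof. by []. Qed.

Lemma bern_rec n : \sum_(k < n.+2) ('C(n.+2, k))%:R * bernoulli R k = 0.
Proof.
rewrite big_ord_recr /=.
have -> : bernoulli R n.+1 = - (\sum_(k < n.+1) ('C(n.+2, k))%:R * bernoulli R k) / (n.+2)%:R.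
  rewrite /bernoulli /= nth_rcons size_bern_seq ltnn eqxx.
  congr (- _ / _); apply: eq_bigr => i _; rewrite nth_bern_seq //.
  by rewrite -ltnS.
by rewrite binSn mulrCA mulfV ?mulr1 ?subrr // pnatr_eq0.
Qed.

Definition Bp (m : nat) : {poly R} :=
  \sum_(k < m.+1) (('C(m, k))%:R * bernoulli R k) *: 'X^(m - k).

Lemma hornerBp m x : (Bp m).[x] = bernoulli_poly m x.
Proof.
rewrite /Bp /bernoulli_poly horner_sum; apply: eq_bigr => i _.
by rewrite hornerZ hornerXn.
Qed.

Lemma Bp0 : Bp 0 = 1.
Proof. by rewrite /Bp big_ord1 bin0 bernoulli0 mulr1 subnn expr0 scale1r. Qed.

Lemma hornerBp0 m : (Bp m).[0] = bernoulli R m.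
Proof.
rewrite hornerBp /bernoulli_poly big_ord_recr /= subnn expr0 binn mul1r mulr1.
rewrite big1 ?add0r // => i _; rewrite expr0n subn_eq0 leqNgt ltn_ord /=.
by rewrite mulr0.
Qed.

Lemma hornerBp1 n : (Bp n.+2).[1] = bernoulli R n.+2.
Proof.
rewrite hornerBp /bernoulli_poly big_ord_recr /= subnn expr0 binn mul1r mulr1.
rewrite [X in X + _](_ : _ = 0) ?add0r // -[RHS](bern_rec n).
by apply: eq_bigr => i _; rewrite expr1n mulr1.
Qed.

Lemma hornerBp1_1 : (Bp 1).[1] - (Bp 1).[0] = 1.
Proof.
rewrite hornerBp0 hornerBp /bernoulli_poly !big_ord_recr big_ord0 /= add0r.
by rewrite bin0 bernoulli0 binn !mul1r !expr1n mulr1 addrK.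
Qed.

Lemma deriv0_const (p : {poly R}) : p^`() = 0 -> p = (p.[0])%:P.
Proof.
move=> hp; rewrite horner_coef0; apply/polyP => i.
rewrite coefC; case: i => [|i] //=.
have := congr1 (fun q : {poly R} => q`_i) hp.
rewrite coef_deriv coef0 => /eqP; rewrite mulrn_eq0 /= => /eqP //.
Qed.

Lemma derivBp m : (Bp m.+1)^`() = (m.+1)%:R *: Bp m.
Proof.
rewrite /Bp big_ord_recr /= subnn expr0 derivD alg_polyC derivC addr0.
rewrite raddf_sum scaler_sumr; apply: eq_bigr => i _.
rewrite -[LHS]/(deriv _) derivZ derivXn -scaler_nat !scalerA.
congr (_ *: _); last by congr ('X^ _); rewrite subSn // -ltnS.
rewrite [LHS](_ : _ = ((m.+1 - i) * 'C(m.+1, i))%:R * bernoulli R i); last first.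
  by rewrite natrM; ring.
by rewrite -mul_bin_down natrM mulrA.
Qed.

Lemma Bp_diff m : Bp m \Po ('X + 1) - Bp m = (m%:R) *: 'X^(m.-1).
Proof.
elim: m => [|m IH]; first by rewrite Bp0 comp_polyC subrr scale0r.
set D := _ - _.
suff: D - (m.+1)%:R *: 'X^m = 0 by move/eqP; rewrite subr_eq0 => /eqP.
set E := _ - _.
have hE : E^`() = 0.
  rewrite /E /D !derivB deriv_comp !derivBp derivD derivX derivC addr0 mulr1.
  rewrite comp_polyZ -scalerBr IH derivZ derivXn scalerA -scaler_nat scalerA.
  by rewrite subrr.
rewrite (deriv0_const hE) /E /D !hornerE horner_comp !hornerE.
apply/eqP; rewrite polyC_eq0; apply/eqP.
case: m {IH D E hE} => [|m].
  by rewrite hornerBp1_1 expr0 mulr1 subrr.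
by rewrite hornerBp1 hornerBp0 subrr expr0n /= mulr0 subrr.
Qed.

Lemma Bp_diff_val m x : (Bp m.+1).[x + 1] - (Bp m.+1).[x] = (m.+1)%:R * x ^+ m.
Proof.
have := congr1 (fun q : {poly R} => q.[x]) (Bp_diff m.+1).
by rewrite !hornerE horner_comp !hornerE.
Qed.


Lemma Bp_tele m (y : R) q :
  (m.+1)%:R * \sum_(j < q) (j%:R + y) ^+ m = (Bp m.+1).[q%:R + y] - (Bp m.+1).[y].
Proof.
rewrite mulr_sumr.
rewrite (eq_bigr (fun j : 'I_q => (Bp m.+1).[j.+1%:R + y] - (Bp m.+1).[j%:R + y])); last first.
  by move=> j _; rewrite -Bp_diff_val [j.+1%:R]mulrS; congr (horner _ _ - _); ring.
rewrite -(big_mkord (fun _ => true) (fun j => (Bp m.+1).[j.+1%:R + y] - (Bp m.+1).[j%:R + y])).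
by rewrite (telescope_sumr_eq (fun j : nat => (Bp m.+1).[j%:R + y])) // add0r.
Qed.

Section Mult.
Variable a : nat.
Hypothesis a_gt0 : (0 < a)%N.

Definition qr (r : nat) : {poly R} := (a%:R^-1) *: ('X + (r%:R)%:P).

Definition Pm (m : nat) : {poly R} :=
  (a%:R ^+ m / a%:R) *: \sum_(r < a) (Bp m \Po qr r).

Lemma a_neq0 : (a%:R : R) != 0.
Proof. by rewrite pnatr_eq0 -lt0n. Qed.

Lemma deriv_qr r : (qr r)^`() = (a%:R^-1)%:P.
Proof.
by rewrite /qr derivZ derivD derivX derivC addr0 -mul_polyC mulr1.
Qed.

Lemma derivPm m : (Pm m.+1)^`() = (m.+1)%:R *: Pm m.
Proof.
rewrite /Pm derivZ raddf_sum /= scaler_sumr scaler_sumr scaler_sumr.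
apply: eq_bigr => r _.
rewrite deriv_comp derivBp deriv_qr comp_polyZ.
rewrite -scalerAl [_ * _%:P]mulrC mul_polyC !scalerA; congr (_ *: _).
rewrite exprS; field; exact: a_neq0.
Qed.

Lemma hornerPm m x :
  (Pm m).[x] = (a%:R ^+ m / a%:R) * \sum_(r < a) (Bp m).[(x + r%:R) / a%:R].
Proof.
rewrite /Pm hornerZ horner_sum; congr (_ * _); apply: eq_bigr => r _.
by rewrite horner_comp /qr hornerZ !hornerE mulrC.
Qed.

Definition Qm m := Pm m - Bp m.

Lemma derivQm m : (Qm m.+1)^`() = (m.+1)%:R *: Qm m.
Proof. by rewrite /Qm derivB derivPm derivBp scalerBr. Qed.

Lemma Qm0 : Qm 0 = 0.
Proof.
apply/eqP; rewrite /Qm subr_eq0 /Pm Bp0.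
under eq_bigr do rewrite comp_polyC.
rewrite sumr_const card_ord expr0 -scaler_nat scalerA mul1r mulVf ?scale1r //.
exact: a_neq0.
Qed.

Lemma Qm_per n : (Qm n.+2).[1] = (Qm n.+2).[0].
Proof.
rewrite /Qm !(hornerD, hornerN) !hornerPm hornerBp1 hornerBp0; congr (_ * _ - _).
apply/eqP; rewrite -subr_eq0 -sumrB.
under eq_bigr do rewrite add0r.
rewrite -(big_mkord (fun _ => true) (fun r => (Bp n.+2).[(1 + r%:R) / a%:R] - (Bp n.+2).[r%:R / a%:R])).
rewrite (telescope_sumr_eq (fun k : nat => (Bp n.+2).[k%:R / a%:R])) //; last first.
  by move=> k _; rewrite [k.+1%:R]mulrS.
rewrite mul0r divff ?a_neq0 //.
by rewrite hornerBp1 hornerBp0 subrr.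
Qed.

Lemma Qm_eq0 m : Qm m = 0.
Proof.
elim: m => [|m IH]; first exact: Qm0.
have h1 : (Qm m.+1)^`() = 0 by rewrite derivQm IH scaler0.
set k := (Qm m.+1).[0].
have hk : Qm m.+1 = k%:P by exact: deriv0_const.
set T := Qm m.+2 - ((m.+2)%:R * k) *: 'X.
have hT : T^`() = 0.
  rewrite /T derivB derivQm hk derivZ derivX.
  by rewrite alg_polyC -mul_polyC polyCM subrr.
have := deriv0_const hT.
move/(congr1 (fun p => p.[1])); rewrite hornerC /T hornerD hornerN Qm_per hornerZ hornerX.
rewrite hornerD hornerN hornerZ hornerX mulr0 subr0.
move/eqP; rewrite -subr_eq0 addrAC subrr add0r mulr1 oppr_eq0 mulf_eq0.
by rewrite pnatr_eq0 /= => /eqP k0; rewrite hk k0.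
Qed.

Lemma mult_thm m :
  (a%:R ^+ m / a%:R) * \sum_(r < a) (Bp m).[r%:R / a%:R] = bernoulli R m.
Proof.
have := congr1 (fun p => p.[0]) (Qm_eq0 m).
rewrite /= /Qm hornerD hornerN hornerPm hornerBp0 hornerC => /eqP; rewrite subr_eq0 => /eqP <-.
by congr (_ * _); apply: eq_bigr => r _; rewrite add0r.
Qed.

End Mult.
End Bern.

End AuxA.
Import AuxA.

Module AuxB.
Set Implicit Arguments. Unset Strict Implicit. Unset Printing Implicit Defensive.

Definition cn (s n : nat) := ((n + s.-1) %/ s)%N.
Definition wn (a d h s n : nat) := (h * cn s n * a + n * d)%N.

Lemma cn_facts s n : (0 < s)%N -> (0 < n)%N ->
  [/\ (1 <= cn s n)%N, ((cn s n).-1 * s < n)%N & (n <= cn s n * s)%N].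
Proof.
move=> s0 n0; rewrite /cn.
have e := divn_eq (n + s.-1) s.
have hr := ltn_pmod (n + s.-1) s0.
set c := ((n + s.-1) %/ s)%N in e *.
set r := ((n + s.-1) %% s)%N in e hr *.
have h1 : (n <= c * s)%N by nia.
have h2 : (1 <= c)%N by nia.
split => //; nia.
Qed.

Lemma cn_le s n : (0 < s)%N -> (cn s n <= n)%N.
Proof.
move=> s0; rewrite /cn; case: n => [|n]; first by rewrite add0n divn_small // prednK.
have e := divn_eq (n.+1 + s.-1) s.
have hr := ltn_pmod (n.+1 + s.-1) s0.
set c := ((n.+1 + s.-1) %/ s)%N in e *.
set r := ((n.+1 + s.-1) %% s)%N in e hr *.
nia.
Qed.

Lemma sum_ind m n j (F : nat -> nat) :
  (\sum_(m <= i < n) (if i == j then F i else 0) = if (m <= j < n) then F j else 0)%N.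
Proof. by rewrite -big_mkcond big_nat1_eq. Qed.

Lemma mod_cancel a d x y : coprime a d -> (x * d %% a = y * d %% a)%N -> (x %% a = y %% a)%N.
Proof.
move=> cop.
wlog le : x y / (x <= y)%N.
  move=> H e; case: (leqP x y) => hxy; first exact: H.
  by symmetry; apply: H; [exact: ltnW|].
move=> e; apply/eqP; rewrite eq_sym eqn_mod_dvd //.
have : (y * d == x * d %[mod a])%N by rewrite e.
by rewrite eqn_mod_dvd ?leq_mul2r ?le ?orbT // -mulnBl Gauss_dvdl.
Qed.

Section Comb.
Variables a d h s : nat.
Hypotheses (a2 : (2 <= a)%N) (d1 : (1 <= d)%N) (h1 : (1 <= h)%N)
  (cop : coprime a d) (s1 : (1 <= s)%N) (sa : (s < a)%N).

Lemma a0 : (0 < a)%N. Proof. by apply: leq_trans a2. Qed.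

Lemma repr_lb t n : (n < a)%N -> representable a d h s t ->
  (t %% a = n * d %% a)%N -> (wn a d h s n <= t)%N.
Proof.
move=> na [x ->] ht.
set X := (\sum_(1 <= i < s.+1) x i)%N.
set Y := (\sum_(1 <= i < s.+1) i * x i)%N.
have eS : (\sum_(1 <= i < s.+1) (h * a + i * d) * x i = h * a * X + d * Y)%N.
  rewrite /X /Y !big_distrr -big_split /=; apply: eq_bigr => i _; lia.
have hY : (Y <= s * X)%N.
  rewrite /Y /X big_distrr /=; rewrite big_nat_cond [X in (_ <= X)%N]big_nat_cond.
  apply: leq_sum => i /andP [/andP [_ hi] _].
  by rewrite leq_mul2r -ltnS hi orbT.
rewrite eS in ht *.
have e2 : (Y * d %% a = n * d %% a)%N.
  rewrite -ht addnA (_ : (a * x 0 + h * a * X) = (x 0 + h * X) * a)%N; last by lia.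
  by rewrite modnMDl mulnC.
have := mod_cancel cop e2; rewrite (modn_small na) => eY.
have nY : (n <= Y)%N by rewrite -eY leq_mod.
have cX : (cn s n <= X)%N.
  rewrite /cn -ltnS ltn_divLR //; nia.
have p1 : (h * cn s n * a <= h * X * a)%N by rewrite leq_mul2r leq_mul2l cX !orbT.
have p2 : (n * d <= Y * d)%N by rewrite leq_mul2r nY orbT.
rewrite /wn; lia.
Qed.

Lemma repr_w n k : representable a d h s (wn a d h s n + k * a)%N.
Proof.
case: n => [|n].
  exists (fun i => if i == 0%N then k else 0%N).
  rewrite /wn /cn big_nat big1 ?addn0 /=; first by rewrite add0n divn_small ?prednK //; lia.
  by move=> i /andP [hi _]; case: eqP => [ei|]; rewrite ?ei in hi; rewrite ?muln0.
have [c1 cl cu] := cn_facts s1 (ltn0Sn n).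
set c := cn s n.+1 in c1 cl cu *.
set rho := (n.+1 - c.-1 * s)%N.
have r1 : (1 <= rho <= s)%N by rewrite /rho; nia.
exists (fun i => (if i == 0%N then k else 0) + (if i == s then c.-1 else 0) + (if i == rho then 1 else 0))%N.
rewrite /= (_ : (if 0%N == s then c.-1 else 0) = 0)%N; last by case: eqP => // s0; move: s1; rewrite -s0.
rewrite (_ : (if 0%N == rho then 1 else 0) = 0)%N; last by case: eqP => // r0; rewrite -r0 in r1.
rewrite !addn0.
rewrite (eq_bigr (fun i => (if i == 0%N then (h * a + i * d) * k else 0) +
   (if i == s then (h * a + i * d) * c.-1 else 0) +
   (if i == rho then (h * a + i * d) else 0))%N); last first.
  by move=> i _; rewrite !mulnDr; case: (i == 0%N); case: (i == s); case: (i == rho); rewrite ?muln0 ?muln1.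
rewrite !big_split /= !sum_ind /= ltnS leqnn s1 /=.
case/andP: r1 => r1 r2; rewrite r1 ltnS r2 /=.
rewrite /wn -/c.
have : (n.+1 = c.-1 * s + rho)%N by rewrite /rho; lia.
move: rho r1 r2 => rho r1 r2 en.
rewrite en.
have -> : c = c.-1.+1 by lia.
rewrite /=; move: (c.-1) => c'; rewrite mulnS !mulnDl; lia.
Qed.

Lemma NR_iff t n : (n < a)%N -> (t %% a = n * d %% a)%N ->
  NR a d h s t <-> (t < wn a d h s n)%N.
Proof.
move=> na ht; split.
  case=> t0 nr; rewrite ltnNge; apply/negP => le.
  apply: nr.
  have ew : (wn a d h s n %% a = n * d %% a)%N.
    by rewrite /wn modnMDl.
  have : (t == wn a d h s n %[mod a])%N by rewrite ht ew.
  rewrite eqn_mod_dvd // => /dvdnP [k ek].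
  have -> : t = (wn a d h s n + k * a)%N by rewrite -ek subnKC.
  exact: repr_w.
move=> tw; split.
  rewrite lt0n; apply/negP => /eqP t0; move: ht tw; rewrite t0 mod0n => /esym/eqP.
  rewrite -/(dvdn a (n * d)) Gauss_dvdl // => /dvdnP [k ek].
  have n0 : n = 0%N by move: na; rewrite ek; case: k {ek} => //= k; nia.
  by rewrite n0 /wn /cn add0n divn_small ?prednK // !muln0 mul0n.
by move=> /repr_lb -/(_ n na ht); rewrite leqNgt tw.
Qed.


Lemma exists_n t : exists2 n, (n < a)%N & (t %% a = n * d %% a)%N.
Proof.
pose f (i : 'I_a) : 'I_a := Ordinal (ltn_pmod (i * d) a0).
have finj : injective f.
  move=> i j /(congr1 val) /= e; apply: val_inj => /=.
  by have := mod_cancel cop e; rewrite !modn_small.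
have [g fg gf] := injF_bij finj.
exists (g (Ordinal (ltn_pmod t a0))) => //.
by have := congr1 val (gf (Ordinal (ltn_pmod t a0))).
Qed.

Definition rn n := (n * d %% a)%N.
Definition qn n := (wn a d h s n %/ a)%N.

Lemma wn_eq n : wn a d h s n = (qn n * a + rn n)%N.
Proof. by rewrite /qn /rn {1}(divn_eq (wn a d h s n) a) /wn modnMDl. Qed.

Lemma class_sum (V : zmodType) N q r (F : nat -> V) : (r < a)%N ->
  (forall j, (j < q)%N -> (j * a + r < N)%N) ->
  (\sum_(t < N | ((t %% a)%N == r) && (t < q * a + r)%N) F t = \sum_(j < q) F (j * a + r)%N)%R.
Proof.
move=> ra hN.
rewrite -(big_mkord (fun t => (t %% a == r) && (t < q * a + r)%N) F) -big_filter.
rewrite -(big_mkord xpredT (fun j => F (j * a + r)%N)) -(big_map (fun j => j * a + r)%N xpredT F).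
apply: perm_big; apply: uniq_perm.
- by rewrite filter_uniq // iota_uniq.
- rewrite map_inj_uniq ?iota_uniq // => i j /eqP; rewrite eqn_add2r eqn_pmul2r ?a0 //.
  by move/eqP.
move=> t; rewrite mem_filter mem_iota add0n subn0; apply/andP/mapP.
  case=> /andP [/eqP tr tq] _; exists (t %/ a)%N.
    rewrite mem_iota add0n subn0 /= -(ltn_pmul2r a0).
    by rewrite -(ltn_add2r r) -{1}tr -divn_eq.
  by rewrite -tr -divn_eq.
case=> j; rewrite mem_iota add0n subn0 /= => jq ->; split.
  by rewrite modnMDl modn_small ?eqxx // ltn_add2r ltn_pmul2r ?a0.
by apply: hN.
Qed.

Lemma Ssum_struct (V : zmodType) N (P : pred nat) (F : nat -> V) :
  (forall t, P t <-> NR a d h s t) -> (forall t, NR a d h s t -> (t < N)%N) ->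
  (\sum_(t < N | P t) F t = \sum_(n < a) \sum_(j < qn n) F (j * a + rn n)%N)%R.
Proof.
move=> HP HN.
rewrite (eq_bigr (fun t : 'I_N => \sum_(n < a | rn n == (t %% a)%N) F t)%R); last first.
  move=> t _; have [n0 n0a e0] := exists_n t.
  rewrite (big_pred1 (Ordinal n0a)) // => i /=.
  apply/eqP/eqP => [e|->]; last by rewrite /rn e0.
  apply: val_inj => /=; have := mod_cancel cop (etrans e e0).
  by rewrite !modn_small.
rewrite (exchange_big_dep xpredT) //=; apply: eq_bigr => n _.
rewrite -(@class_sum V N (qn n) (rn n) F); last first.
- move=> j jq; apply: HN; apply/(NR_iff (ltn_ord n)).
    by rewrite modnMDl modn_small // ltn_pmod // a0.
  by rewrite wn_eq ltn_add2r ltn_pmul2r ?a0.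
- by rewrite ltn_pmod // a0.
apply: eq_bigl => t.
have [/eqP e|ne] := boolP (rn n == t %% a).
  rewrite andbT -wn_eq e eqxx /=; apply/idP/idP.
    by move/HP/(NR_iff (ltn_ord n)); apply; rewrite -e.
  by move=> tw; apply/HP/(NR_iff (ltn_ord n)) => //; rewrite -e.
rewrite andbF; case: eqP => //= e; by rewrite e eqxx in ne.
Qed.

Lemma NR_bound t : NR a d h s t -> (t < h * a * a + a * d)%N.
Proof.
move=> nr; have [n na e] := exists_n t.
have := (NR_iff na e).1 nr; rewrite /wn => tw.
have c1 := cn_le n s1.
have p1 : (h * cn s n * a <= h * a * a)%N.
  by apply: leq_mul => //; apply: leq_mul => //; apply: (leq_trans c1 (ltnW na)).
have p2 : (n * d <= a * d)%N by apply: leq_mul => //; apply: ltnW.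
lia.
Qed.

End Comb.

End AuxB.
Import AuxB.

Module AuxC.
Set Implicit Arguments. Unset Strict Implicit. Unset Printing Implicit Defensive.
Import numFieldNormedType.Exports.
Local Open Scope ring_scope.

Lemma cn_step s b : (0 < s)%N -> cn s b.+1 = (cn s b + (s %| b))%N.
Proof.
move=> s0; rewrite /cn /dvdn.
move: (divn_eq b s) (ltn_pmod b s0) => eb hr; rewrite eb modnMDl modn_mod.
move: (b %/ s)%N (b %% s)%N hr {eb} => k r hr.
have e1 : (k * s + r + s.-1 = k * s + (r + s.-1))%N by lia.
have e2 : ((k * s + r).+1 + s.-1 = k * s + (r + s))%N by lia.
rewrite e2 e1 !divnMDl //.
case: (eqVneq r 0%N) => [->|rn0] /=.
  by rewrite !add0n divnn s0 (divn_small (m := s.-1)) ?prednK // addn0 addn1.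
rewrite addn0; congr (_ + _)%N.
have -> : (r + s = 1 * s + r)%N by lia.
have -> : (r + s.-1 = 1 * s + r.-1)%N by lia.
rewrite !divnMDl // !divn_small //; lia.
Qed.

Lemma G_ident (F : fieldType) (u v : F) s b : (0 < s)%N ->
  (v - 1) * \sum_(n < b.+1) u ^+ cn s n * v ^+ n =
  u ^+ cn s b * v ^+ b.+1 - 1 - (u - 1) * v * \sum_(k < cn s b) (u * v ^+ s) ^+ k.
Proof.
move=> s0; elim: b => [|b IH].
  rewrite big_ord1 /cn add0n divn_small ?prednK // big_ord0 !expr0 mulr0 subr0.
  by rewrite !mul1r mulr1 expr1.
rewrite big_ord_recr /= mulrDr IH cn_step //.
case: (boolP (s %| b)%N) => [/dvdnP [k ->]|ndv] /=.
  have ck : cn s (k * s) = k.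
    by rewrite /cn divnMDl // divn_small ?addn0 // prednK.
  rewrite ck addn1 big_ord_recr /= exprMn -exprM (mulnC s k) !exprS; ring.
rewrite addn0 !exprS; ring.
Qed.

Lemma ceil_cn (R : realType) s n : (0 < s)%N ->
  (Num.ceil (n%:R / s%:R : R))%:~R = (cn s n)%:R :> R.
Proof.
move=> s0.
have sR : (0 : R) < s%:R by rewrite ltr0n.
suff -> : Num.ceil (n%:R / s%:R : R) = (cn s n)%:Z by [].
apply: ceil_def.
case: n => [|n].
  rewrite /cn add0n divn_small ?prednK // mul0r /= lexx andbT.
  by rewrite sub0r ltrN10.
have [c1 cl cu] := cn_facts s0 (ltn0Sn n).
apply/andP; split.
  have -> : (cn s n.+1)%:Z = ((cn s n.+1).-1)%:Z + 1 by rewrite -PoszD addn1 prednK.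
  rewrite addrK -pmulrn.
  by rewrite ltr_pdivlMr // -natrM ltr_nat.
by rewrite ler_pdivrMr // -natrM /= ler_nat.
Qed.

Lemma expR_ne1 (R : realType) (z : R) k : z != 0 -> (0 < k)%N -> expR z ^+ k != 1.
Proof.
move=> z0 k0; rewrite -expRM_natl; apply/eqP => e.
have /eqP : k%:R * z = 0 by apply: expR_inj; rewrite e expR0.
by rewrite mulf_eq0 pnatr_eq0 (negbTE z0) orbF => /eqP k00; move: k0; rewrite k00.
Qed.

Section Main.
Variable R : realType.
Variables a d h s : nat.
Hypotheses (a2 : (2 <= a)%N) (d1 : (1 <= d)%N) (h1 : (1 <= h)%N)
  (cop : coprime a d) (s1 : (1 <= s)%N) (sa : (s < a)%N).

Let a0 : (0 < a)%N. Proof. by apply: leq_trans a2. Qed.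

Lemma rn_inj : injective (fun i : 'I_a => Ordinal (ltn_pmod (rn a d i) a0)).
Proof.
move=> i j /(congr1 val) /= e; apply: val_inj => /=.
rewrite /rn !modn_mod in e.
by have := mod_cancel cop e; rewrite !modn_small.
Qed.

Lemma sum_rn (G : nat -> R) : \sum_(n < a) G (rn a d n) = \sum_(r < a) G r.
Proof.
rewrite [RHS](reindex_inj rn_inj) /=.
by apply: eq_bigr => i _; rewrite /rn modn_mod.
Qed.


Lemma closed_form (z : R) : z != 0 ->
  let c : R := (cn s a.-1)%:R in
  \sum_(n < a) \sum_(i < qn a d h s n) expR (((i * a + rn a d n)%N)%:R * z) =
         (expR ((h%:R * c + d%:R) * a%:R * z) - 1)
           / ((expR (d%:R * z) - 1) * (expR (a%:R * z) - 1))
         + (expR (a%:R * h%:R * z) - 1)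
             * (expR (c * (h%:R * a%:R + s%:R * d%:R) * z) - 1)
           / ((expR (a%:R * z) - 1)
              * (expR ((h%:R * a%:R + s%:R * d%:R) * z) - 1)
              * (expR (- (d%:R * z)) - 1))
         - 1 / (expR z - 1).
Proof.
move=> z0 c.
set x := expR z.
set C := cn s a.-1.
have hA : x ^+ a - 1 != 0 by rewrite subr_eq0 expR_ne1.
have hV : x ^+ d - 1 != 0 by rewrite subr_eq0 expR_ne1.
have hX : x - 1 != 0 by rewrite subr_eq0 -(expr1 x) expR_ne1.
have hT : x ^+ (h * a + s * d) - 1 != 0.
  by rewrite subr_eq0 expR_ne1 // addn_gt0 muln_gt0 h1 a0.
have hV0 : x ^+ d != 0 by rewrite expf_neq0 // gt_eqF // expR_gt0.
have e1 : forall n : 'I_a, \sum_(i < qn a d h s n) expR (((i * a + rn a d n)%N)%:R * z)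
    = (x ^+ (wn a d h s n) - x ^+ (rn a d n)) / (x ^+ a - 1).
  move=> n; apply: (canRL (mulfK hA)).
  rewrite wn_eq //.
  have -> : x ^+ (qn a d h s n * a + rn a d n) - x ^+ rn a d n =
      x ^+ rn a d n * ((x ^+ a) ^+ qn a d h s n - 1).
    by rewrite mulrBr mulr1 -exprM -exprD; congr (x ^+ _ - _); lia.
  rewrite [_ ^+ qn a d h s n - 1]subrX1 mulrCA mulrC; congr (_ * _).
  rewrite mulr_sumr; apply: eq_bigr => i _.
  by rewrite expRM_natl -/x exprD -exprM mulnC mulrC.
rewrite (eq_bigr _ (fun n _ => e1 n)) -mulr_suml sumrB.
rewrite (sum_rn (fun r => x ^+ r)).
have eR : \sum_(r < a) x ^+ r = (x ^+ a - 1) / (x - 1) by rewrite subrX1 mulrC mulKf.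
rewrite eR.
have eW : \sum_(n < a) x ^+ wn a d h s n = \sum_(n < a) (x ^+ (h * a)) ^+ cn s n * (x ^+ d) ^+ n.
  apply: eq_bigr => n _.
  by rewrite /wn exprD -!exprM mulnAC [(n * d)%N]mulnC.
have hG := G_ident (x ^+ (h * a)) (x ^+ d) a.-1 s1.
rewrite -/C prednK // in hG.
rewrite eW.
set G := \sum_(n < a) _.
set Sg := \sum_(k < C) _ in hG.
have eS : (x ^+ (h * a + s * d) - 1) * Sg = x ^+ (h * a + s * d) ^+ C - 1.
  rewrite [RHS]subrX1; congr (_ * _); apply: eq_bigr => k _.
  by rewrite exprD -exprM (mulnC s d).
have eG : G = (x ^+ (h * a) ^+ C * x ^+ d ^+ a - 1 - (x ^+ (h * a) - 1) * x ^+ d * Sg) / (x ^+ d - 1).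
  by rewrite -hG mulrC mulKf.
have eSg : Sg = (x ^+ (h * a + s * d) ^+ C - 1) / (x ^+ (h * a + s * d) - 1).
  by rewrite -eS mulrC mulKf.
rewrite /c -!natrM -!natrD -!natrM !expRM_natl -/x expRN expRM_natl -/x.
have -> : x ^+ ((h * C + d) * a) = x ^+ (h * a) ^+ C * x ^+ d ^+ a.
  by rewrite -!exprM -exprD; congr (_ ^+ _); lia.
have -> : x ^+ (a * h) = x ^+ (h * a) by rewrite mulnC.
have -> : x ^+ (C * (h * a + s * d)) = x ^+ (h * a + s * d) ^+ C by rewrite -exprM mulnC.
rewrite eG eSg.
move: hA hV hX hT hV0.
set A := x ^+ a; set V := x ^+ d; set U := x ^+ (h * a); set T := x ^+ (h * a + s * d).
set W := U ^+ C; set P := T ^+ C.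
move=> hA hV hX hT hV0.
field.
by rewrite hX hV0 mulN1r -opprB oppr_eq0 hT hA hV.
Qed.

End Main.

Lemma exp_series_cvg (R : realType) (x : R) :
  (series (exp_coeff x) @ \oo --> expR x)%classic.
Proof. exact: is_cvg_series_exp_coeff. Qed.

Lemma add_cont (R : realType) : continuous (fun x : R * R => x.1 + x.2).
Proof. exact: add_continuous. Qed.

End AuxC.
Import AuxC.

Import numFieldNormedType.Exports.
Local Open Scope classical_set_scope.
Local Open Scope ring_scope.

Theorem mainTheorem7 (R : realType) (a d h s : nat)
  (ha : (2 <= a)%N) (hd : (1 <= d)%N) (hh : (1 <= h)%N)
  (hcop : coprime a d) (hs1 : (1 <= s)%N) (hsa : (s < a)%N) :
  (exists N : nat, forall n : nat, NR a d h s n -> (n < N)%N) /\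
  forall N : nat, (forall n : nat, NR a d h s n -> (n < N)%N) ->
    let S := Ssum R a d h s N in
    let c : R := (Num.ceil ((a.-1)%:R / s%:R : R))%:~R in
    (forall m : nat, (1 <= m)%N ->
       m%:R * S m.-1 =
       a%:R ^+ m.-1 *
         \sum_(n < a)
           bernoulli_poly m
             (h%:R * (Num.ceil (n%:R / s%:R : R))%:~R + n%:R * d%:R / a%:R)
       - bernoulli_poly m 0)
    /\
    (forall z : R, z != 0 ->
       (fun k : nat => \sum_(0 <= j < k) S j * z ^+ j / (j`!)%:R) @ \oo -->
         (expR ((h%:R * c + d%:R) * a%:R * z) - 1)
           / ((expR (d%:R * z) - 1) * (expR (a%:R * z) - 1))
         + (expR (a%:R * h%:R * z) - 1)
             * (expR (c * (h%:R * a%:R + s%:R * d%:R) * z) - 1)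
           / ((expR (a%:R * z) - 1)
              * (expR ((h%:R * a%:R + s%:R * d%:R) * z) - 1)
              * (expR (- (d%:R * z)) - 1))
         - 1 / (expR z - 1)).
Proof.
have a0 : (0 < a)%N by apply: leq_trans ha.
have aR : (a%:R : R) != 0 by rewrite pnatr_eq0 -lt0n.
split.
  exists (h * a * a + a * d)%N => n; apply: NR_bound => //.
move=> N HN S c.
have HS : forall m, S m = \sum_(n < a) \sum_(j < qn a d h s n)
    (((j * a + rn a d n)%N)%:R : R) ^+ m.
  move=> m; rewrite /S /Ssum.
  apply: (@Ssum_struct a d h s ha hd hh hcop hs1 hsa R N (fun t => `[< NR a d h s t >]) (fun t => (t%:R : R) ^+ m)) => //.
  by move=> t; split => /asboolP.
split.
  case=> [//|m] _ /=; rewrite HS.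
  have step : forall n : 'I_a, m.+1%:R * \sum_(j < qn a d h s n)
      (((j * a + rn a d n)%N)%:R : R) ^+ m = a%:R ^+ m *
      ((Bp R m.+1).[(qn a d h s n)%:R + (rn a d n)%:R / a%:R] - (Bp R m.+1).[(rn a d n)%:R / a%:R]).
    move=> n; rewrite -Bp_tele mulrCA; congr (_ * _); rewrite mulr_sumr.
    apply: eq_bigr => j _; rewrite -exprMn; congr (_ ^+ _).
    by rewrite natrD natrM; field.
  rewrite mulr_sumr (eq_bigr _ (fun n _ => step n)) -mulr_sumr sumrB mulrBr.
  congr (_ * _ - _).
    apply: eq_bigr => n _; rewrite hornerBp ceil_cn //; congr (bernoulli_poly _ _).
    have e := wn_eq a d h s n.
    have eR : (((qn a d h s n * a + rn a d n)%N)%:R : R) = ((h * cn s n * a + n * d)%N)%:R.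
      by rewrite -e.
    rewrite !natrD !natrM in eR.
    apply: (mulIf aR); rewrite !mulrDl !divfK //.
  rewrite (sum_rn ha hcop (fun r => (Bp R m.+1).[r%:R / a%:R])).
  have := mult_thm R a0 m.+1.
  rewrite exprS [a%:R * _]mulrC mulfK // => ->.
  by rewrite -hornerBp hornerBp0.
move=> z z0.
have E : (fun k : nat => \sum_(0 <= j < k) S j * z ^+ j / (j`!)%:R) =
    (fun k => \sum_(n < a) \sum_(i < qn a d h s n)
       series (exp_coeff ((((i * a + rn a d n)%N)%:R : R) * z)) k).
  apply: funext => k.
  under eq_bigr do rewrite HS !mulr_suml.
  rewrite exchange_big; apply: eq_bigr => n _ /=.
  under eq_bigr do rewrite !mulr_suml.
  rewrite exchange_big; apply: eq_bigr => i _ /=.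
  rewrite /series /exp_coeff /=; apply: eq_bigr => j _.
  by rewrite exprMn.
rewrite E.
have := closed_form ha hd hh hcop hs1 hsa z0; rewrite /= /c ceil_cn // => <-.
apply: cvg_big; first exact: add_cont.
move=> n _; apply: cvg_big; first exact: add_cont.
move=> i _; exact: exp_series_cvg.
Qed.
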